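(* Let $\Gamma=G_4$ be the graph with two vertices $V_\alpha,V_\beta$, one loop at $V_\alpha$, one loop at $V_\beta$, and exactly one edge joining $V_\alpha$ and $V_\beta$, with degrees $d_\alpha,d_\beta\in\mathbb{Z}$. The family $\mathcal{F}(G_4,(d_\alpha,d_\beta))$ is jumping if and only if one of the following holds: (i) $d_\alpha<0$ and $d_\beta=1$; (ii) $d_\alpha=0$ and $d_\beta\ge 0$; (iii) $d_\alpha=1$ and $d_\beta<0$; (iv) $d_\alpha\ge 0$ and $d_\beta=0$; (v) $d_\alpha=d_\beta=1$.
   Context: Let $\Gamma$ be a connected graph (loops and multiple edges allowed) with vertices $V_1,\dots,V_n$ and integers $d_1,\dots,d_n$. A nodal curve with dual graph $\Gamma$ and rational components is a curve $C$ obtained from the disjoint union of copies $\mathbb{P}^1_{V_i}$ of $\mathbb{P}^1$ by choosing, for each edge of $\Gamma$, a point on each of its endpoint copies (all chosen points distinct) and identifying these two points to a node. A line bundle on $C$ is equivalent to line bundles on each $\mathbb{P}^1_{V_i}$ together with, at each node, an identification of the two fibres (descent data, a scalar in $\mathbb{C}^*$ after trivialising); global sections are tuples of sections on the $\mathbb{P}^1$'s compatible with these identifications. The family $\mathcal{F}(\Gamma,(d_i))$ consists of all pairs $(C,L)$ with $C$ such a curve (any choice of node positions) and $L$ a line bundle on $C$ whose pullback to $\mathbb{P}^1_{V_i}$ has degree $d_i$ for all $i$ (any descent data). $\Gamma$ with degrees $(d_i)$ is called jumping if $h^0(C,L)$ is not constant on $\mathcal{F}(\Gamma,(d_i))$,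 and non-jumping otherwise. *)

(* Defs.v *)
From HB Require Import structures.
From mathcomp Require Import all_boot all_order all_algebra.
From mathcomp Require Import complex.
From mathcomp Require Import Rstruct.
Unset Printing Implicit Defensive.
Import Order.TTheory GRing.Theory Num.Theory.
Local Open Scope ring_scope.

Definition C : fieldType := complex Rdefinitions.R.

(* Dimension of H^0(P^1, O(d)): 0 if d < 0, d + 1 otherwise. *)
Definition nsec (d : int) : nat := if d < 0 then 0%N else (absz d).+1.

(* A global section of O(d) on P^1 is a homogeneous polynomial of degree d in
   the homogeneous coordinates (X,Y), given by its coefficient vector c
   (c_i is the coefficient of X^i Y^(d-i)).  [ev d c p] is its value at the
   representative p = (x, y) in C^2 \ {0} of a point of P^1 (this amounts to
   a trivialisation of the fibre of O(d) at that point). *)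
Definition ev (d : int) (c : 'rV[C]_(nsec d)) (p : C * C) : C :=
  \sum_(i < nsec d) c 0 i * p.1 ^+ i * p.2 ^+ (absz d - i).

Definition distinct_pts (p q : C * C) : Prop := p.1 * q.2 - q.1 * p.2 != 0.

(* Data of a member (C, L) of the family F(G_4, (da, db)):
   on P^1_alpha: the two points a1, a2 glued to form the loop at V_alpha,
                 and the point a3 glued to b3 (the edge alpha--beta);
   on P^1_beta : the two points b1, b2 glued to form the loop at V_beta,
                 and the point b3;
   descent data (gluing scalars) la at the alpha-loop node, lb at the
   beta-loop node, le at the edge node. *)
Record G4_data := mkG4 {
  a1 : C * C; a2 : C * C; a3 : C * C;
  b1 : C * C; b2 : C * C; b3 : C * C;
  la : C; lb : C; le : C }.

(* Validity: points on each component pairwise distinct (hence also nonzero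
   representatives), and nonzero gluing scalars. *)
Definition G4_valid (D : G4_data) : Prop :=
  [/\ [/\ distinct_pts (a1 D) (a2 D), distinct_pts (a1 D) (a3 D)
        & distinct_pts (a2 D) (a3 D)],
      [/\ distinct_pts (b1 D) (b2 D), distinct_pts (b1 D) (b3 D)
        & distinct_pts (b2 D) (b3 D)]
    & [/\ la D != 0, lb D != 0 & le D != 0]].

(* The compatibility conditions on a pair (s, t) of sections (s on P^1_alpha
   of degree da, t on P^1_beta of degree db), packed as one row vector
   v = (s | t); the three entries vanish iff the pair glues to a global
   section of L on the nodal curve. *)
Definition G4_conds (da db : int) (D : G4_data)
    (v : 'rV[C]_(nsec da + nsec db)) : 'rV[C]_3 :=
  let s := lsubmx v in let t := rsubmx v in
  \row_(k < 3)
    (if k == 0 :> nat then ev da s (a1 D) - la D * ev da s (a2 D)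
     else if k == 1 :> nat then ev db t (b1 D) - lb D * ev db t (b2 D)
     else ev da s (a3 D) - le D * ev db t (b3 D)).

Definition G4_h0 (da db : int) (D : G4_data) : nat :=
  \rank (kermx (lin1_mx (G4_conds da db D))).

Definition G4_jumping (da db : int) : Prop :=
  exists D1 D2 : G4_data, [/\ G4_valid D1, G4_valid D2 &
    G4_h0 da db D1 <> G4_h0 da db D2].

(* Main.v *)
From HB Require Import structures.
Require Import Defs.
From mathcomp Require Import all_boot all_order all_algebra.
From mathcomp Require Import complex Rstruct zify ring.
Import Order.TTheory GRing.Theory Num.Theory.
Local Open Scope ring_scope.

Lemma natC_neq0 n : (n.+1%:R : C) != 0.
Proof. rewrite /C. by rewrite pnatr_eq0. Qed.


Definition hev (n : nat) (P : {poly C}) (p : C * C) : C :=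
  \sum_(i < n.+1) P`_i * p.1 ^+ i * p.2 ^+ (n - i).

Lemma sec n (P : {poly C}) : exists c : 'rV[C]_(nsec (Posz n)),
  forall p, ev (Posz n) c p = hev n P p.
Proof.
exists (\row_(i < n.+1) P`_i) => p; rewrite /ev /hev.
by apply: eq_bigr => i _; rewrite mxE.
Qed.

Lemma ev_neg n (c : 'rV[C]_(nsec (Negz n))) p : ev (Negz n) c p = 0.
Proof. by rewrite /ev big_ord0. Qed.

Lemma ev_0 (c : 'rV[C]_(nsec (Posz 0))) p q : ev (Posz 0) c p = ev (Posz 0) c q.
Proof. by rewrite /ev !big_ord1 /= !expr0 !mulr1. Qed.

Lemma ev_1add (c : 'rV[C]_(nsec (Posz 1))) p q :
  ev (Posz 1) c (p.1 + q.1, p.2 + q.2) = ev (Posz 1) c p + ev (Posz 1) c q.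
Proof. rewrite /ev !big_ord_recl !big_ord0 /= !expr0 !expr1 !addr0. ring. Qed.

Lemma ev_add d c1 c2 p : ev d (c1 + c2) p = ev d c1 p + ev d c2 p.
Proof. rewrite /ev -big_split; apply: eq_bigr => i _; by rewrite !mxE !mulrDl. Qed.

Lemma ev_scale d a c p : ev d (a *: c) p = a * ev d c p.
Proof. rewrite /ev mulr_sumr; apply: eq_bigr => i _; rewrite mxE; ring. Qed.

Lemma ev_zero d p : ev d 0 p = 0.
Proof. by rewrite /ev big1 // => i _; rewrite mxE !mul0r. Qed.

Definition Lf (q p : C * C) : C := p.1 * q.2 - q.1 * p.2.
Definition lf (q : C * C) : {poly C} := \poly_(i < 2) (if i == 0%N then - q.1 else q.2).

Lemma size_lf q : (size (lf q) <= 2)%N.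
Proof. exact: size_poly. Qed.

Lemma hev_lf q p : hev 1 (lf q) p = Lf q p.
Proof.
rewrite /hev /Lf !big_ord_recl big_ord0 /= !coef_poly /=.
rewrite !expr0 !expr1; ring.
Qed.

Lemma hev_y n (P : {poly C}) p : p.2 != 0 -> (size P <= n.+1)%N ->
  hev n P p = p.2 ^+ n * P.[p.1 / p.2].
Proof.
move=> y0 sP; rewrite (horner_coef_wide _ sP) mulr_sumr /hev.
apply: eq_bigr => i _.
have hi : (i <= n)%N by rewrite -ltnS.
have -> : p.2 ^+ n = p.2 ^+ (n - i) * p.2 ^+ i by rewrite -exprD subnK.
rewrite expr_div_n.
have yi : p.2 ^+ i != 0 by rewrite expf_neq0.
transitivity (P`_i * (p.1 ^+ i / p.2 ^+ i * p.2 ^+ i) * p.2 ^+ (n - i)).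
  by rewrite divfK.
ring.
Qed.

Lemma hev_y0 n (P : {poly C}) p : p.2 = 0 -> hev n P p = P`_n * p.1 ^+ n.
Proof.
move=> y0; rewrite /hev big_ord_recr /= subnn expr0 mulr1 big1 ?add0r // => i _.
by rewrite y0 expr0n subn_eq0 leqNgt ltn_ord /= mulr0.
Qed.

Lemma hevM m k (P Q : {poly C}) p : (size P <= m.+1)%N -> (size Q <= k.+1)%N ->
  hev (m + k) (P * Q) p = hev m P p * hev k Q p.
Proof.
move=> sP sQ.
have sPQ : (size (P * Q)%R <= (m + k).+1)%N.
  apply: (leq_trans (size_mul_leq _ _)); lia.
have [y0|y0] := eqVneq p.2 0.
  rewrite !hev_y0 // coefM (bigD1 (Ordinal (leq_addr k m.+1))) //= big1.
    by rewrite addr0 addKn exprD; ring.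
  move=> j /= hj.
  have hj' : (j : nat) <> m by move=> e; move: hj; apply/negP/negPn/eqP; apply: val_inj.
  move: (nat_of_ord j) hj' => jj hj'.
  have [jm|jm] := ltnP jj m.
    have -> : Q`_(m + k - jj) = 0 by apply: nth_default; apply: (leq_trans sQ); lia.
    by rewrite mulr0.
  have -> : P`_jj = 0 by apply: nth_default; apply: (leq_trans sP); lia.
  by rewrite mul0r.
rewrite !hev_y // hornerM exprD; ring.
Qed.

Lemma lf_pow_size q n : (size (lf q ^+ n) <= n.+1)%N.
Proof.
apply: (leq_trans (size_exp_leq _ _)).
have := size_lf q; move: (size (lf q)) => s hs.
rewrite ltnS.
case: s hs => [|[|[|]]] //= _; lia.
Qed.

Lemma hev_pow q n p : hev n (lf q ^+ n) p = Lf q p ^+ n.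
Proof.
elim: n => [|n IH].
  by rewrite /hev big_ord1 expr0 coefC /= !expr0 !mulr1.
rewrite exprS (hevM 1 n) ?size_lf ?lf_pow_size // hev_lf IH.
by rewrite exprS.
Qed.

Lemma hev_2 q r k p : hev k.+2 (lf q * lf r ^+ k.+1) p = Lf q p * Lf r p ^+ k.+1.
Proof.
by rewrite (hevM 1 k.+1) ?size_lf ?lf_pow_size // hev_lf hev_pow.
Qed.

Definition r3 (x y z : C) : 'rV[C]_3 :=
  \row_(k < 3) (if k == 0 :> nat then x else if k == 1 :> nat then y else z).

Lemma conds_linear da db D : linear (G4_conds da db D).
Proof.
move=> a u v; rewrite /G4_conds !linearP /=.
apply/rowP => k; rewrite !mxE !ev_add !ev_scale.
case: ifP => _; first ring.
case: ifP => _; ring.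
Qed.

HB.instance Definition _ da db D :=
  GRing.isLinear.Build C _ _ _ (G4_conds da db D) (conds_linear da db D).

Definition rk da db D := \rank (lin1_mx (G4_conds da db D)).

Lemma h0E da db D : G4_h0 da db D = (nsec da + nsec db - rk da db D)%N.
Proof. by rewrite /G4_h0 mxrank_ker. Qed.

Lemma rk_le da db D : (rk da db D <= nsec da + nsec db)%N.
Proof. exact: rank_leq_row. Qed.

Lemma im_sub da db D v :
  (G4_conds da db D v <= lin1_mx (G4_conds da db D))%MS.
Proof. by rewrite -mul_rV_lin1 submxMl. Qed.

Lemma lin_sub da db D m (W : 'M[C]_(m, 3)) :
  (forall v, (G4_conds da db D v <= W)%MS) -> (lin1_mx (G4_conds da db D) <= W)%MS.
Proof. by move=> H; apply/row_subP => i; rewrite rowE mul_rV_lin1; apply: H. Qed.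

Lemma condsE da db D s t :
  G4_conds da db D (row_mx s t) =
  r3 (ev da s (a1 D) - la D * ev da s (a2 D))
     (ev db t (b1 D) - lb D * ev db t (b2 D))
     (ev da s (a3 D) - le D * ev db t (b3 D)).
Proof. by rewrite /G4_conds row_mxKl row_mxKr. Qed.

Lemma condsE' da db D v :
  G4_conds da db D v =
  r3 (ev da (lsubmx v) (a1 D) - la D * ev da (lsubmx v) (a2 D))
     (ev db (rsubmx v) (b1 D) - lb D * ev db (rsubmx v) (b2 D))
     (ev da (lsubmx v) (a3 D) - le D * ev db (rsubmx v) (b3 D)).
Proof. by []. Qed.

Lemma im_st da db D s t x y z :
  x = ev da s (a1 D) - la D * ev da s (a2 D) ->
  y = ev db t (b1 D) - lb D * ev db t (b2 D) ->
  z = ev da s (a3 D) - le D * ev db t (b3 D) ->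
  (r3 x y z <= lin1_mx (G4_conds da db D))%MS.
Proof. by move=> -> -> ->; rewrite -condsE im_sub. Qed.

Lemma r3_comb m (A : 'M[C]_(m, 3)) a x y z x' y' z' :
  (r3 x y z <= A)%MS -> (r3 x' y' z' <= A)%MS ->
  (r3 (x + a * x') (y + a * y') (z + a * z') <= A)%MS.
Proof.
move=> h1 h2.
have -> : r3 (x + a * x') (y + a * y') (z + a * z') = r3 x y z + a *: r3 x' y' z'.
  by apply/rowP => k; rewrite !mxE; case: ifP => _; [|case: ifP => _].
by rewrite addmx_sub // scalemx_sub.
Qed.

Lemma r3_scale m (A : 'M[C]_(m, 3)) a x y z :
  (r3 x y z <= A)%MS -> (r3 (a * x) (a * y) (a * z) <= A)%MS.
Proof.
move=> h.
have -> : r3 (a * x) (a * y) (a * z) = a *: r3 x y z.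
  by apply/rowP => k; rewrite !mxE; case: ifP => _; [|case: ifP => _].
by rewrite scalemx_sub.
Qed.

Lemma rk_ge3 m (A : 'M[C]_(m, 3)) :
  (r3 1 0 0 <= A)%MS -> (r3 0 1 0 <= A)%MS -> (r3 0 0 1 <= A)%MS -> \rank A = 3%N.
Proof.
move=> h0 h1 h2; apply/eqP; rewrite eqn_leq rank_leq_col /=.
rewrite -{1}(mxrank1 C 3); apply: mxrankS; apply/row_subP => i; rewrite row1.
case: i => [[|[|[|//]]] hi].
- by have -> : delta_mx 0 (Ordinal hi) = r3 1 0 0 by apply/rowP => k; rewrite !mxE; case: k => [[|[|[|]]] ?].
- by have -> : delta_mx 0 (Ordinal hi) = r3 0 1 0 by apply/rowP => k; rewrite !mxE; case: k => [[|[|[|]]] ?].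
- by have -> : delta_mx 0 (Ordinal hi) = r3 0 0 1 by apply/rowP => k; rewrite !mxE; case: k => [[|[|[|]]] ?].
Qed.

Lemma rk_ge2 m (A : 'M[C]_(m, 3)) (u v : 'rV[C]_3) i j :
  (u <= A)%MS -> (v <= A)%MS -> u 0 i * v 0 j - u 0 j * v 0 i != 0 ->
  (2 <= \rank A)%N.
Proof.
move=> hu hv hd.
have u0 : u != 0 by apply: contraNneq hd => ->; rewrite !mxE !mul0r subrr.
rewrite leqNgt; apply/negP => hA.
have r1 : \rank u = 1%N by rewrite rank_rV u0.
have := mxrank_leqif_sup hu; rewrite r1 => hl.
have eqr : \rank A = 1%N by have := hl.1; lia.
have Au : (A <= u)%MS by rewrite -hl.2 eqr.
have /sub_rVP [a hva] := submx_trans hv Au.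
by move: hd; rewrite hva !mxE => /eqP; apply; ring.
Qed.

Definition c3 (a b c : C) : 'cV[C]_3 :=
  \col_(k < 3) (if k == 0 :> nat then a else if k == 1 :> nat then b else c).

Lemma rk_ub da db D m (W : 'M[C]_(m, 3)) :
  (forall v, (G4_conds da db D v <= W)%MS) -> (rk da db D <= \rank W)%N.
Proof. by move=> H; apply: mxrankS; apply: lin_sub. Qed.

Lemma rk_lb da db D m (W : 'M[C]_(m, 3)) :
  (W <= lin1_mx (G4_conds da db D))%MS -> (\rank W <= rk da db D)%N.
Proof. exact: mxrankS. Qed.

Lemma sub_ker_r3 x y z a b c : x * a + y * b + z * c = 0 ->
  (r3 x y z <= kermx (c3 a b c))%MS.
Proof.
move=> h; apply/sub_kermxP; apply/rowP => i; rewrite !mxE.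
rewrite !big_ord_recl big_ord0 /= !mxE /=.
by rewrite addr0 addrA h.
Qed.

Lemma rank_ker_c3 a b c : c3 a b c != 0 -> \rank (kermx (c3 a b c)) = 2%N.
Proof.
move=> h; rewrite mxrank_ker -mxrank_tr rank_rV.
have -> : ((c3 a b c)^T != 0) by apply: contra h => /eqP e; rewrite -[c3 a b c]trmxK e linear0.
by [].
Qed.

Lemma sub_r3 a x y z : (r3 (a * x) (a * y) (a * z) <= r3 x y z)%MS.
Proof. by apply: r3_scale. Qed.

Lemma rank_r3 x y z : (\rank (r3 x y z) <= 1)%N.
Proof. exact: rank_leq_row. Qed.

Lemma rk_ge1 da db D v : G4_conds da db D v != 0 -> (1 <= rk da db D)%N.
Proof.
move=> h; have := @rk_lb da db D 1 _ (im_sub da db D v); rewrite rank_rV h; by [].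
Qed.

Lemma c3_neq0 a b c : a != 0 -> c3 a b c != 0.
Proof. by move=> h; apply: contra h => /eqP/colP/(_ 0); rewrite !mxE /= => ->. Qed.
Lemma c3_neq0' a b c : b != 0 -> c3 a b c != 0.
Proof. by move=> h; apply: contra h => /eqP/colP/(_ 1); rewrite !mxE /= => ->. Qed.
Lemma c3_neq0'' a b c : c != 0 -> c3 a b c != 0.
Proof. by move=> h; apply: contra h => /eqP/colP/(_ 2); rewrite !mxE /= => ->. Qed.

Lemma r3_neq0'' x y z : z != 0 -> r3 x y z != 0.
Proof. by move=> h; apply: contra h => /eqP/rowP/(_ 2); rewrite !mxE /= => ->. Qed.

Lemma secL n q : exists c : 'rV[C]_(nsec (Posz n)), forall p, ev (Posz n) c p = Lf q p ^+ n.
Proof. by have [c hc] := sec n (lf q ^+ n); exists c => p; rewrite hc hev_pow. Qed.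

Lemma sec2 k q r : exists c : 'rV[C]_(nsec (Posz k.+2)),
  forall p, ev (Posz k.+2) c p = Lf q p * Lf r p ^+ k.+1.
Proof. by have [c hc] := sec k.+2 (lf q * lf r ^+ k.+1); exists c => p; rewrite hc hev_2. Qed.

Lemma Lf_self q : Lf q q = 0.
Proof. rewrite /Lf; ring. Qed.

Lemma Lf_neq0 p q : distinct_pts p q -> Lf q p != 0.
Proof. by []. Qed.

Lemma Lf_neq0' p q : distinct_pts q p -> Lf q p != 0.
Proof.
rewrite /distinct_pts /Lf => h.
have -> : p.1 * q.2 - q.1 * p.2 = - (q.1 * p.2 - p.1 * q.2) by ring.
by rewrite oppr_eq0.
Qed.

Lemma interp3 k p q r : Lf q p != 0 -> Lf r p != 0 ->
  exists c : 'rV[C]_(nsec (Posz k.+2)),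
  [/\ ev (Posz k.+2) c p = 1, ev (Posz k.+2) c q = 0 & ev (Posz k.+2) c r = 0].
Proof.
move=> hq hr; have [c hc] := sec2 k q r.
have nz : Lf q p * Lf r p ^+ k.+1 != 0 by rewrite mulf_neq0 // expf_neq0.
exists ((Lf q p * Lf r p ^+ k.+1)^-1 *: c); rewrite !ev_scale !hc.
split; first by rewrite mulVf.
  by rewrite Lf_self !mul0r mulr0.
by rewrite Lf_self expr0n /= !mulr0.
Qed.

Lemma interp2 n p q : Lf q p != 0 ->
  exists c : 'rV[C]_(nsec (Posz n.+1)),
  ev (Posz n.+1) c p = 1 /\ ev (Posz n.+1) c q = 0.
Proof.
move=> hq; have [c hc] := secL n.+1 q.
have nz : Lf q p ^+ n.+1 != 0 by rewrite expf_neq0.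
exists ((Lf q p ^+ n.+1)^-1 *: c); rewrite !ev_scale !hc.
by rewrite mulVf // Lf_self expr0n /= mulr0.
Qed.

Lemma sec_one : exists c : 'rV[C]_(nsec (Posz 0)), forall p, ev (Posz 0) c p = 1.
Proof. by have [c hc] := secL 0 (0, 0); exists c => p; rewrite hc expr0. Qed.

Lemma secX n : exists c : 'rV[C]_(nsec (Posz n)), forall p, ev (Posz n) c p = p.1 ^+ n.
Proof.
have [c hc] := secL n (0, 1); exists c => p; rewrite hc /Lf /=.
by rewrite mulr1 mul0r subr0.
Qed.

Lemma secY n : exists c : 'rV[C]_(nsec (Posz n)), forall p, ev (Posz n) c p = p.2 ^+ n.
Proof.
have [c hc] := secL n (-1, 0); exists c => p; rewrite hc /Lf /=.
by rewrite mulr0 sub0r mulN1r opprK.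
Qed.

Lemma r3_le m (A : 'M[C]_(m, 3)) u v a x y z x1 y1 z1 x2 y2 z2 :
  u = r3 x1 y1 z1 -> v = r3 x2 y2 z2 ->
  (u <= A)%MS -> (v <= A)%MS ->
  x = x1 + a * x2 -> y = y1 + a * y2 -> z = z1 + a * z2 ->
  (r3 x y z <= A)%MS.
Proof. by move=> -> -> h1 h2 -> -> ->; apply: r3_comb. Qed.

Lemma r3_le_scale m (A : 'M[C]_(m, 3)) a x y z x1 y1 z1 :
  (r3 x1 y1 z1 <= A)%MS ->
  x = a * x1 -> y = a * y1 -> z = a * z1 ->
  (r3 x y z <= A)%MS.
Proof. by move=> h -> -> ->; apply: r3_scale. Qed.

Lemma not_jump da db k : (forall D, G4_valid D -> rk da db D = k) -> ~ G4_jumping da db.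
Proof.
move=> H [D1 [D2 [v1 v2 hne]]]; apply: hne.
by rewrite !h0E (H _ v1) (H _ v2).
Qed.

Lemma jump da db D1 D2 k : G4_valid D1 -> G4_valid D2 ->
  (rk da db D1 <= k)%N -> (k < rk da db D2)%N -> G4_jumping da db.
Proof.
move=> v1 v2 h1 h2; exists D1, D2; split => //.
rewrite !h0E; have := rk_le da db D2; lia.
Qed.

Arguments r3_le {m A u v} a {x y z x1 y1 z1 x2 y2 z2}.
Arguments r3_le_scale {m A} a {x y z x1 y1 z1}.

Lemma r3_00 : r3 0 0 0 = 0.
Proof. by apply/rowP => i; rewrite !mxE; case: ifP => _ //; case: ifP. Qed.

Lemma N1 n m D : G4_valid D -> rk (Negz n) (Negz m) D = 0%N.
Proof.
move=> _.
have h := @rk_ub (Negz n) (Negz m) D 1 (r3 0 0 0).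
rewrite r3_00 mxrank0 in h.
apply/eqP; rewrite -leqn0; apply: h => v.
by rewrite condsE' !ev_neg !mulr0 subrr r3_00.
Qed.

Lemma N2 n D : G4_valid D -> rk (Negz n) (Posz 0) D = 1%N.
Proof.
move=> [_ _ [_ _ nle]].
have h1 : (rk (Negz n) (Posz 0) D <= 1)%N.
  have := rank_r3 0 (1 - lb D) (- le D).
  have := @rk_ub (Negz n) (Posz 0) D 1 (r3 0 (1 - lb D) (- le D)).
  suff H : forall v, (G4_conds (Negz n) 0 D v <= r3 0 (1 - lb D) (- le D))%MS.
    by move/(_ H); lia.
  move=> v; rewrite condsE' !ev_neg (ev_0 _ (b2 D) (b1 D)) (ev_0 _ (b3 D) (b1 D)).
  by apply: (@r3_le_scale _ _ (ev 0 (rsubmx v) (b1 D)) _ _ _ _ _ _ (submx_refl _)); ring.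
have [t ht] := sec_one.
have h2 := @rk_ge1 (Negz n) (Posz 0) D (row_mx 0 t).
rewrite condsE !ev_neg !ht in h2.
have : (0 < rk (Negz n) 0%Z D)%N by apply: h2; apply: r3_neq0''; rewrite mulr1 sub0r oppr_eq0.
lia.
Qed.

Arguments Lf_neq0 {p q}.
Arguments Lf_neq0' {p q}.
Arguments interp3 k {p q r}.
Arguments interp2 n {p q}.

Lemma N3 n k D : G4_valid D -> rk (Negz n) (Posz k.+2) D = 2%N.
Proof.
move=> [_ [e12 e13 e23] [_ _ nle]].
have h1 : (rk (Negz n) (Posz k.+2) D <= 2)%N.
  have := rank_ker_c3 _ _ _ (c3_neq0 1 0 0 (oner_neq0 C)).
  have := @rk_ub (Negz n) (Posz k.+2) D 3 (kermx (c3 1 0 0)).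
  suff H : forall v, (G4_conds (Negz n) (Posz k.+2) D v <= kermx (c3 1 0 0))%MS.
    by move/(_ H) => ? ?; lia.
  by move=> v; rewrite condsE'; apply: sub_ker_r3; rewrite !ev_neg; ring.
have [t1 [h11 h12 h13]] := interp3 k (Lf_neq0 e12) (Lf_neq0 e13).
have [t2 [h23 h21 h22]] := interp3 k (Lf_neq0' e13) (Lf_neq0' e23).
pose A := lin1_mx (G4_conds (Negz n) (Posz k.+2) D).
have u1 : (r3 0 1 0 <= A)%MS.
  by apply: (@im_st _ _ _ 0 t1); rewrite ?ev_neg ?h11 ?h12 ?h13; ring.
have u2 : (r3 0 0 (- le D) <= A)%MS.
  by apply: (@im_st _ _ _ 0 t2); rewrite ?ev_neg ?h21 ?h22 ?h23; ring.
have := @rk_ge2 _ _ _ _ 1 2 u1 u2; rewrite !mxE /=.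
have -> : 1 * - le D - 0 * 0 = - le D by ring.
rewrite oppr_eq0 nle => /(_ isT) h2; apply/eqP; rewrite eqn_leq h1; exact: h2.
Qed.

Lemma N4 n k D : G4_valid D -> rk (Posz k.+2) (Negz n) D = 2%N.
Proof.
move=> [[d12 d13 d23] _ [_ _ nle]].
have h1 : (rk (Posz k.+2) (Negz n) D <= 2)%N.
  have := rank_ker_c3 _ _ _ (c3_neq0' 0 1 0 (oner_neq0 C)).
  have := @rk_ub (Posz k.+2) (Negz n) D 3 (kermx (c3 0 1 0)).
  suff H : forall v, (G4_conds (Posz k.+2) (Negz n) D v <= kermx (c3 0 1 0))%MS.
    by move/(_ H) => ? ?; lia.
  by move=> v; rewrite condsE'; apply: sub_ker_r3; rewrite !ev_neg; ring.
have [s1 [h11 h12 h13]] := interp3 k (Lf_neq0 d12) (Lf_neq0 d13).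
have [s2 [h23 h21 h22]] := interp3 k (Lf_neq0' d13) (Lf_neq0' d23).
pose A := lin1_mx (G4_conds (Posz k.+2) (Negz n) D).
have u1 : (r3 1 0 0 <= A)%MS.
  by apply: (@im_st _ _ _ s1 0); rewrite ?ev_neg ?h11 ?h12 ?h13; ring.
have u2 : (r3 0 0 1 <= A)%MS.
  by apply: (@im_st _ _ _ s2 0); rewrite ?ev_neg ?h21 ?h22 ?h23; ring.
have := @rk_ge2 _ _ _ _ 0 2 u1 u2; rewrite !mxE /=.
have -> : 1 * 1 - 0 * 0 = 1 :> C by ring.
rewrite oner_eq0 => /(_ isT) h2; apply/eqP; rewrite eqn_leq h1; exact: h2.
Qed.

Lemma N5 k m D : G4_valid D -> rk (Posz k.+2) (Posz m.+1) D = 3%N.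
Proof.
move=> [[d12 d13 d23] [e12 e13 e23] [_ _ nle]].
have [s1 [h11 h12 h13]] := interp3 k (Lf_neq0 d12) (Lf_neq0 d13).
have [s2 [h23 h21 h22]] := interp3 k (Lf_neq0' d13) (Lf_neq0' d23).
have [t [g1 g2]] := interp2 m (Lf_neq0 e12).
apply: rk_ge3.
- by apply: (@im_st _ _ _ s1 0); rewrite ?ev_zero ?h11 ?h12 ?h13; ring.
- have u2 : (r3 0 0 1 <= lin1_mx (G4_conds (Posz k.+2) (Posz m.+1) D))%MS.
    by apply: (@im_st _ _ _ s2 0); rewrite ?ev_zero ?h21 ?h22 ?h23; ring.
  have u3 : (r3 0 1 (- le D * ev _ t (b3 D)) <= lin1_mx (G4_conds (Posz k.+2) (Posz m.+1) D))%MS.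
    by apply: (@im_st _ _ _ 0 t); rewrite ?ev_zero ?g1 ?g2; ring.
  by apply: (r3_le (le D * ev _ t (b3 D)) erefl erefl u3 u2); ring.
- by apply: (@im_st _ _ _ s2 0); rewrite ?ev_zero ?h21 ?h22 ?h23; ring.
Qed.

Lemma N6 k D : G4_valid D -> rk (Posz 1) (Posz k.+2) D = 3%N.
Proof.
move=> [[d12 d13 d23] [e12 e13 e23] [_ _ nle]].
have [s [g1 g2]] := interp2 0 (Lf_neq0 d12).
have [t1 [h11 h12 h13]] := interp3 k (Lf_neq0 e12) (Lf_neq0 e13).
have [t2 [h23 h21 h22]] := interp3 k (Lf_neq0' e13) (Lf_neq0' e23).
pose A := lin1_mx (G4_conds (Posz 1) (Posz k.+2) D).
have u1 : (r3 1 0 (ev _ s (a3 D)) <= A)%MS.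
  by apply: (@im_st _ _ _ s 0); rewrite ?ev_zero ?g1 ?g2; ring.
have u2 : (r3 0 0 (- le D) <= A)%MS.
  by apply: (@im_st _ _ _ 0 t2); rewrite ?ev_zero ?h21 ?h22 ?h23; ring.
have u3 : (r3 0 0 1 <= A)%MS.
  apply: (r3_le_scale (- (le D)^-1) u2); rewrite ?mulr0 //.
  by rewrite mulNr mulrN opprK mulVf.
apply: rk_ge3.
- by apply: (r3_le (- ev _ s (a3 D)) erefl erefl u1 u3); ring.
- by apply: (@im_st _ _ _ 0 t1); rewrite ?ev_zero ?h11 ?h12 ?h13; ring.
- exact: u3.
Qed.

Lemma N7 n D : G4_valid D -> rk (Posz 0) (Negz n) D = 1%N.
Proof.
move=> _.
have h1 : (rk (Posz 0) (Negz n) D <= 1)%N.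
  have := rank_r3 (1 - la D) 0 1.
  have := @rk_ub (Posz 0) (Negz n) D 1 (r3 (1 - la D) 0 1).
  suff H : forall v, (G4_conds 0 (Negz n) D v <= r3 (1 - la D) 0 1)%MS.
    by move/(_ H); lia.
  move=> v; rewrite condsE' !ev_neg (ev_0 _ (a2 D) (a1 D)) (ev_0 _ (a3 D) (a1 D)).
  by apply: (r3_le_scale (ev 0 (lsubmx v) (a1 D)) (submx_refl _)); ring.
have [s hs] := sec_one.
have h2 := @rk_ge1 (Posz 0) (Negz n) D (row_mx s 0).
rewrite condsE !ev_neg !hs in h2.
have : (0 < rk (Posz 0) (Negz n) D)%N.
  by apply: h2; apply: r3_neq0''; rewrite mulr0 subr0 oner_eq0.
lia.
Qed.

Notation P1 := ((1 : C), (0 : C)).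
Notation P2 := ((0 : C), (1 : C)).
Notation P3 := ((1 : C), (1 : C)).
Definition Dstd (x y z : C) := mkG4 P1 P2 P3 P1 P2 P3 x y z.

Lemma m1_neq0 : (-1 : C) != 0. Proof. by rewrite oppr_eq0 oner_eq0. Qed.

Lemma d12 : distinct_pts P1 P2.
Proof. rewrite /distinct_pts /=; have -> : (1:C) * 1 - 0 * 0 = 1 by ring. exact: oner_neq0. Qed.
Lemma d13 : distinct_pts P1 P3.
Proof. rewrite /distinct_pts /=; have -> : (1:C) * 1 - 1 * 0 = 1 by ring. exact: oner_neq0. Qed.
Lemma d23 : distinct_pts P2 P3.
Proof. rewrite /distinct_pts /=; have -> : (0:C) * 1 - 1 * 1 = -1 by ring. exact: m1_neq0. Qed.

Lemma Dstd_valid x y z : x != 0 -> y != 0 -> z != 0 -> G4_valid (Dstd x y z).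
Proof.
move=> *; rewrite /G4_valid /=; split; split => //; by [apply: d12 | apply: d13 | apply: d23].
Qed.

Lemma P3add : P3 = (P1.1 + P2.1, P1.2 + P2.2).
Proof. by rewrite /= addr0 add0r. Qed.

Lemma ev1_P3 (c : 'rV[C]_(nsec (Posz 1))) :
  ev (Posz 1) c P3 = ev (Posz 1) c P1 + ev (Posz 1) c P2.
Proof. by rewrite {1}P3add ev_1add. Qed.

Lemma two_neq0 : (2%:R : C) != 0. Proof. exact: natC_neq0. Qed.
Lemma three_neq0 : (3%:R : C) != 0. Proof. exact: natC_neq0. Qed.

Lemma J1 n : G4_jumping (Negz n) (Posz 1).
Proof.
apply: (@jump _ _ (Dstd 1 (-1) 1) (Dstd 1 1 1) 1).
- by apply: Dstd_valid; rewrite ?oner_eq0 ?m1_neq0.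
- by apply: Dstd_valid; rewrite ?oner_eq0.
- have := rank_r3 0 1 (-1).
  have := @rk_ub (Negz n) (Posz 1) (Dstd 1 (-1) 1) 1 (r3 0 1 (-1)).
  suff H : forall v, (G4_conds (Negz n) 1 (Dstd 1 (-1) 1) v <= r3 0 1 (-1))%MS.
    by move/(_ H); lia.
  move=> v; rewrite condsE' /= !ev_neg ev1_P3.
  by apply: (r3_le_scale (ev 1 (rsubmx v) P1 + ev 1 (rsubmx v) P2) (submx_refl _)); ring.
- have [t1 ht1] := secX 1; have [t2 ht2] := secY 1.
  pose A := lin1_mx (G4_conds (Negz n) (Posz 1) (Dstd 1 1 1)).
  have u1 : (r3 0 1 (-1) <= A)%MS.
    by apply: (@im_st _ _ _ 0 t1); rewrite /= ?ev_neg ?ht1 /=; ring.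
  have u2 : (r3 0 (-1) (-1) <= A)%MS.
    by apply: (@im_st _ _ _ 0 t2); rewrite /= ?ev_neg ?ht2 /=; ring.
  have := @rk_ge2 _ _ _ _ 1 2 u1 u2; rewrite !mxE /=.
  have -> : 1 * -1 - -1 * -1 = - 2%:R :> C by ring.
  by rewrite oppr_eq0 two_neq0 => /(_ isT).
Qed.

Lemma J2 : G4_jumping (Posz 0) (Posz 0).
Proof.
apply: (@jump _ _ (Dstd 1 1 1) (Dstd 2%:R 2%:R 1) 1).
- by apply: Dstd_valid; rewrite ?oner_eq0.
- by apply: Dstd_valid; rewrite ?oner_eq0 ?two_neq0.
- have := rank_r3 0 0 1.
  have := @rk_ub (Posz 0) (Posz 0) (Dstd 1 1 1) 1 (r3 0 0 1).
  suff H : forall v, (G4_conds 0 0 (Dstd 1 1 1) v <= r3 0 0 1)%MS.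
    by move/(_ H); lia.
  move=> v; rewrite condsE' /=.
  rewrite (ev_0 (lsubmx v) P2 P1) (ev_0 (lsubmx v) P3 P1).
  rewrite (ev_0 (rsubmx v) P2 P1) (ev_0 (rsubmx v) P3 P1).
  by apply: (r3_le_scale (ev 0 (lsubmx v) P1 - ev 0 (rsubmx v) P1) (submx_refl _)); ring.
- have [c hc] := sec_one.
  pose A := lin1_mx (G4_conds (Posz 0) (Posz 0) (Dstd 2%:R 2%:R 1)).
  have u1 : (r3 (-1) 0 1 <= A)%MS.
    by apply: (@im_st _ _ _ c 0); rewrite /= ?ev_zero ?hc /=; ring.
  have u2 : (r3 0 (-1) (-1) <= A)%MS.
    by apply: (@im_st _ _ _ 0 c); rewrite /= ?ev_zero ?hc /=; ring.
  have := @rk_ge2 _ _ _ _ 0 1 u1 u2; rewrite !mxE /=.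
  have -> : -1 * -1 - 0 * 0 = 1 :> C by ring.
  by rewrite oner_eq0 => /(_ isT).
Qed.

Lemma J3 m : G4_jumping (Posz 0) (Posz m.+1).
Proof.
apply: (@jump _ _ (Dstd 1 1 1) (Dstd 2%:R 1 1) 2).
- by apply: Dstd_valid; rewrite ?oner_eq0.
- by apply: Dstd_valid; rewrite ?oner_eq0 ?two_neq0.
- have := rank_ker_c3 _ _ _ (c3_neq0 1 0 0 (oner_neq0 C)).
  have := @rk_ub (Posz 0) (Posz m.+1) (Dstd 1 1 1) 3 (kermx (c3 1 0 0)).
  suff H : forall v, (G4_conds 0 (Posz m.+1) (Dstd 1 1 1) v <= kermx (c3 1 0 0))%MS.
    by move/(_ H) => ? ?; lia.
  move=> v; rewrite condsE'; apply: sub_ker_r3 => /=.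
  rewrite (ev_0 (lsubmx v) P2 P1); ring.
- have [c hc] := sec_one; have [t1 ht1] := secX m.+1; have [t2 ht2] := secY m.+1.
  pose A := lin1_mx (G4_conds (Posz 0) (Posz m.+1) (Dstd 2%:R 1 1)).
  have u1 : (r3 (-1) 0 1 <= A)%MS.
    by apply: (@im_st _ _ _ c 0); rewrite /= ?ev_zero ?hc /=; ring.
  have u2 : (r3 0 1 (-1) <= A)%MS.
    by apply: (@im_st _ _ _ 0 t1); rewrite /= ?ev_zero ?ht1 /= ?expr0n ?expr1n /=; ring.
  have u3 : (r3 0 (-1) (-1) <= A)%MS.
    by apply: (@im_st _ _ _ 0 t2); rewrite /= ?ev_zero ?ht2 /= ?expr0n ?expr1n /=; ring.
  have w : (r3 0 0 (- 2%:R) <= A)%MS.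
    by apply: (r3_le 1 erefl erefl u2 u3); ring.
  have e2 : (r3 0 0 1 <= A)%MS.
    apply: (r3_le_scale (- (2%:R)^-1) w); rewrite ?mulr0 //.
    by rewrite mulNr mulrN opprK mulVf // two_neq0.
  suff -> : rk (Posz 0) (Posz m.+1) (Dstd 2%:R 1 1) = 3%N by [].
  apply: rk_ge3 => //.
  - by apply: (r3_le (-1) erefl erefl e2 u1); ring.
  - by apply: (r3_le 1 erefl erefl u2 e2); ring.
Qed.

Lemma J4 n : G4_jumping (Posz 1) (Negz n).
Proof.
apply: (@jump _ _ (Dstd (-1) 1 1) (Dstd 2%:R 1 1) 1).
- by apply: Dstd_valid; rewrite ?oner_eq0 ?m1_neq0.
- by apply: Dstd_valid; rewrite ?oner_eq0 ?two_neq0.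
- have := rank_r3 1 0 1.
  have := @rk_ub (Posz 1) (Negz n) (Dstd (-1) 1 1) 1 (r3 1 0 1).
  suff H : forall v, (G4_conds 1 (Negz n) (Dstd (-1) 1 1) v <= r3 1 0 1)%MS.
    by move/(_ H); lia.
  move=> v; rewrite condsE' /= !ev_neg ev1_P3.
  by apply: (r3_le_scale (ev 1 (lsubmx v) P1 + ev 1 (lsubmx v) P2) (submx_refl _)); ring.
- have [t1 ht1] := secX 1; have [t2 ht2] := secY 1.
  pose A := lin1_mx (G4_conds (Posz 1) (Negz n) (Dstd 2%:R 1 1)).
  have u1 : (r3 1 0 1 <= A)%MS.
    by apply: (@im_st _ _ _ t1 0); rewrite /= ?ev_neg ?ht1 /=; ring.
  have u2 : (r3 (- 2%:R) 0 1 <= A)%MS.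
    by apply: (@im_st _ _ _ t2 0); rewrite /= ?ev_neg ?ht2 /=; ring.
  have := @rk_ge2 _ _ _ _ 0 2 u1 u2; rewrite !mxE /=.
  have -> : 1 * 1 - 1 * - 2%:R = 3%:R :> C by ring.
  by rewrite three_neq0 => /(_ isT).
Qed.

Lemma J5 : G4_jumping (Posz 1) (Posz 0).
Proof.
apply: (@jump _ _ (Dstd 1 1 1) (Dstd 2%:R 2%:R 1) 2).
- by apply: Dstd_valid; rewrite ?oner_eq0.
- by apply: Dstd_valid; rewrite ?oner_eq0 ?two_neq0.
- have := rank_ker_c3 _ _ _ (c3_neq0' 0 1 0 (oner_neq0 C)).
  have := @rk_ub (Posz 1) (Posz 0) (Dstd 1 1 1) 3 (kermx (c3 0 1 0)).
  suff H : forall v, (G4_conds 1 0 (Dstd 1 1 1) v <= kermx (c3 0 1 0))%MS.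
    by move/(_ H) => ? ?; lia.
  move=> v; rewrite condsE'; apply: sub_ker_r3 => /=.
  rewrite (ev_0 (rsubmx v) P2 P1); ring.
- have [c hc] := sec_one; have [t1 ht1] := secX 1; have [t2 ht2] := secY 1.
  pose A := lin1_mx (G4_conds (Posz 1) (Posz 0) (Dstd 2%:R 2%:R 1)).
  have u1 : (r3 1 0 1 <= A)%MS.
    by apply: (@im_st _ _ _ t1 0); rewrite /= ?ev_zero ?ht1 /=; ring.
  have u2 : (r3 (- 2%:R) 0 1 <= A)%MS.
    by apply: (@im_st _ _ _ t2 0); rewrite /= ?ev_zero ?ht2 /=; ring.
  have u3 : (r3 0 (-1) (-1) <= A)%MS.
    by apply: (@im_st _ _ _ 0 c); rewrite /= ?ev_zero ?hc /=; ring.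
  have w : (r3 3%:R 0 0 <= A)%MS.
    by apply: (r3_le (-1) erefl erefl u1 u2); ring.
  have e0 : (r3 1 0 0 <= A)%MS.
    apply: (r3_le_scale ((3%:R)^-1) w); rewrite ?mulr0 //.
    by rewrite mulVf // three_neq0.
  have e2 : (r3 0 0 1 <= A)%MS.
    by apply: (r3_le (-1) erefl erefl u1 e0); ring.
  have w3 : (r3 0 1 1 <= A)%MS.
    by apply: (r3_le_scale (-1) u3); ring.
  suff -> : rk (Posz 1) (Posz 0) (Dstd 2%:R 2%:R 1) = 3%N by [].
  apply: rk_ge3 => //.
  by apply: (r3_le (-1) erefl erefl w3 e2); ring.
Qed.

Lemma J6 k : G4_jumping (Posz k.+2) (Posz 0).
Proof.
apply: (@jump _ _ (Dstd 1 1 1) (Dstd 1 2%:R 1) 2).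
- by apply: Dstd_valid; rewrite ?oner_eq0.
- by apply: Dstd_valid; rewrite ?oner_eq0 ?two_neq0.
- have := rank_ker_c3 _ _ _ (c3_neq0' 0 1 0 (oner_neq0 C)).
  have := @rk_ub (Posz k.+2) (Posz 0) (Dstd 1 1 1) 3 (kermx (c3 0 1 0)).
  suff H : forall v, (G4_conds (Posz k.+2) 0 (Dstd 1 1 1) v <= kermx (c3 0 1 0))%MS.
    by move/(_ H) => ? ?; lia.
  move=> v; rewrite condsE'; apply: sub_ker_r3 => /=.
  rewrite (ev_0 (rsubmx v) P2 P1); ring.
- have [c hc] := sec_one.
  have [s1 [h11 h12 h13]] := interp3 k (Lf_neq0 d12) (Lf_neq0 d13).
  have [s2 [h23 h21 h22]] := interp3 k (Lf_neq0' d13) (Lf_neq0' d23).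
  pose A := lin1_mx (G4_conds (Posz k.+2) (Posz 0) (Dstd 1 2%:R 1)).
  have e0 : (r3 1 0 0 <= A)%MS.
    by apply: (@im_st _ _ _ s1 0); rewrite /= ?ev_zero ?h11 ?h12 ?h13; ring.
  have e2 : (r3 0 0 1 <= A)%MS.
    by apply: (@im_st _ _ _ s2 0); rewrite /= ?ev_zero ?h21 ?h22 ?h23; ring.
  have u3 : (r3 0 (-1) (-1) <= A)%MS.
    by apply: (@im_st _ _ _ 0 c); rewrite /= ?ev_zero ?hc /=; ring.
  have w3 : (r3 0 1 1 <= A)%MS.
    by apply: (r3_le_scale (-1) u3); ring.
  suff -> : rk (Posz k.+2) (Posz 0) (Dstd 1 2%:R 1) = 3%N by [].
  apply: rk_ge3 => //.
  by apply: (r3_le (-1) erefl erefl w3 e2); ring.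
Qed.

Lemma J7 : G4_jumping (Posz 1) (Posz 1).
Proof.
apply: (@jump _ _ (Dstd (-1) (-1) 1) (Dstd 2%:R 1 1) 2).
- by apply: Dstd_valid; rewrite ?oner_eq0 ?m1_neq0.
- by apply: Dstd_valid; rewrite ?oner_eq0 ?two_neq0.
- have := rank_ker_c3 _ _ _ (c3_neq0 1 (-1) (-1) (oner_neq0 C)).
  have := @rk_ub (Posz 1) (Posz 1) (Dstd (-1) (-1) 1) 3 (kermx (c3 1 (-1) (-1))).
  suff H : forall v, (G4_conds 1 1 (Dstd (-1) (-1) 1) v <= kermx (c3 1 (-1) (-1)))%MS.
    by move/(_ H) => ? ?; lia.
  move=> v; rewrite condsE'; apply: sub_ker_r3 => /=.
  rewrite !ev1_P3; ring.
- have [t1 ht1] := secX 1; have [t2 ht2] := secY 1.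
  pose A := lin1_mx (G4_conds (Posz 1) (Posz 1) (Dstd 2%:R 1 1)).
  have u1 : (r3 1 0 1 <= A)%MS.
    by apply: (@im_st _ _ _ t1 0); rewrite /= ?ev_zero ?ht1 /=; ring.
  have u2 : (r3 (- 2%:R) 0 1 <= A)%MS.
    by apply: (@im_st _ _ _ t2 0); rewrite /= ?ev_zero ?ht2 /=; ring.
  have u3 : (r3 0 1 (-1) <= A)%MS.
    by apply: (@im_st _ _ _ 0 t1); rewrite /= ?ev_zero ?ht1 /=; ring.
  have w : (r3 3%:R 0 0 <= A)%MS.
    by apply: (r3_le (-1) erefl erefl u1 u2); ring.
  have e0 : (r3 1 0 0 <= A)%MS.
    apply: (r3_le_scale ((3%:R)^-1) w); rewrite ?mulr0 //.
    by rewrite mulVf // three_neq0.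
  have e2 : (r3 0 0 1 <= A)%MS.
    by apply: (r3_le (-1) erefl erefl u1 e0); ring.
  suff -> : rk (Posz 1) (Posz 1) (Dstd 2%:R 1 1) = 3%N by [].
  apply: rk_ge3 => //.
  by apply: (r3_le 1 erefl erefl u3 e2); ring.
Qed.

Theorem mainTheorem11 (da db : int) :
  G4_jumping da db <->
  ((da < 0 /\ db = 1) \/
   (da = 0 /\ 0 <= db) \/
   (da = 1 /\ db < 0) \/
   (0 <= da /\ db = 0) \/
   (da = 1 /\ db = 1)).
Proof.
case: da => [[|[|ka]]|na]; case: db => [[|[|kb]]|nb].
- by split => _; [lia | exact: J2].
- by split => _; [lia | exact: (J3 0)].
- by split => _; [lia | exact: (J3 kb.+1)].
- split => [J|HH]; exfalso; last lia.
  by apply: (@not_jump _ _ _ (fun D v => N7 nb D v)) J.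
- by split => _; [lia | exact: J5].
- by split => _; [lia | exact: J7].
- split => [J|HH]; exfalso; last lia.
  by apply: (@not_jump _ _ _ (fun D v => N6 kb D v)) J.
- by split => _; [lia | exact: (J4 nb)].
- by split => _; [lia | exact: (J6 ka)].
- split => [J|HH]; exfalso; last lia.
  by apply: (@not_jump _ _ _ (fun D v => N5 ka 0 D v)) J.
- split => [J|HH]; exfalso; last lia.
  by apply: (@not_jump _ _ _ (fun D v => N5 ka kb.+1 D v)) J.
- split => [J|HH]; exfalso; last lia.
  by apply: (@not_jump _ _ _ (fun D v => N4 nb ka D v)) J.
- split => [J|HH]; exfalso; last lia.
  by apply: (@not_jump _ _ _ (fun D v => N2 na D v)) J.
- by split => _; [lia | exact: (J1 na)].
- split => [J|HH]; exfalso; last lia.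
  by apply: (@not_jump _ _ _ (fun D v => N3 na kb D v)) J.
- split => [J|HH]; exfalso; last lia.
  by apply: (@not_jump _ _ _ (fun D v => N1 na nb D v)) J.
Qed.
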